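(* Let $N\ge4$ be even. Take $X_j=\sigma_z$, $X_j'=\sigma_x$ for $j=1,\dots,N-1$, and $X_N=(\sigma_z+\sigma_x)/\sqrt2$, $X_N'=(\sigma_z-\sigma_x)/\sqrt2$, and let $I^N_{CHSH}=\sum_{a,b\in\{0,1\}}(-1)^{ab}\mathbb A_a\otimes\mathbb B_b$. Then $\langle G|I^N_{CHSH}|G\rangle=2\sqrt2$, $2\sqrt2$ is the largest eigenvalue of $I^N_{CHSH}$, and its eigenspace has dimension $2^{N-2}$; it is spanned by the orthonormal states $\bigotimes_{k\in K}\sigma_x^{(k)}|G\rangle$ where $K$ ranges over subsets of $\{1,\dots,N-1\}$ of even cardinality.
   Context: $|G\rangle=\frac{1}{\sqrt2}(|0\cdots0\rangle+|1\cdots1\rangle)$ is the $N$-qubit GHZ state; $\sigma_x,\sigma_y,\sigma_z$ are Pauli matrices and $\sigma_x^{(k)}$ denotes $\sigma_x$ acting on the $k$-th qubit (identity elsewhere). $\mathbb A_0=\bigotimes_{j=1}^{N-1}X_j$, $\mathbb A_1=\bigotimes_{j=1}^{N-1}X_j'$ act on qubits $1,\dots,N-1$, and $\mathbb B_0=X_N$, $\mathbb B_1=X_N'$ act on qubit $N$. *)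

(* Defs.v *)
From HB Require Import structures.
From mathcomp Require Import all_boot all_order all_algebra all_field.
Set Implicit Arguments. Unset Strict Implicit. Unset Printing Implicit Defensive.
Import Order.TTheory GRing.Theory Num.Theory.
Local Open Scope ring_scope.

(* Pauli matrices, indexed by 'I_2 (0 = |0>, 1 = |1>). *)
Definition sigma_x : 'M[algC]_2 := \matrix_(i, j) (if i == j then 0 else 1).
Definition sigma_z : 'M[algC]_2 :=
  \matrix_(i, j) (if i == j then (if val i == 0%N then 1 else -1) else 0).

(* Qubits are numbered 0 .. N-1 (paper's qubit k is our qubit k-1).
   Computational basis index i : 'I_(2^N); qubit k is the k-th binary digit of i. *)
Definition qbit (N : nat) (i : 'I_(2 ^ N)) (k : 'I_N) : 'I_2 :=
  inord (odd (i %/ 2 ^ k)).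

Definition tens (N : nat) (op : 'I_N -> 'M[algC]_2) : 'M[algC]_(2 ^ N) :=
  \matrix_(i, j) \prod_(k < N) op k (qbit i k) (qbit j k).

Definition ghz (N : nat) : 'cV[algC]_(2 ^ N) :=
  \col_i (if (val i == 0%N) || (val i == (2 ^ N).-1) then (sqrtC 2)^-1 else 0).

Definition X_j : 'M[algC]_2 := sigma_z.
Definition X_j' : 'M[algC]_2 := sigma_x.
Definition X_N : 'M[algC]_2 := (sqrtC 2)^-1 *: (sigma_z + sigma_x).
Definition X_N' : 'M[algC]_2 := (sqrtC 2)^-1 *: (sigma_z - sigma_x).

(* A_a (x) B_b : A_a = (x)_{j<N} X_j^{(a)} on qubits 1..N-1, B_b = X_N^{(b)} on qubit N. *)
Definition AB (N : nat) (a b : bool) : 'M[algC]_(2 ^ N) :=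
  tens (fun k : 'I_N => if (k < N.-1)%N then (if a then X_j' else X_j)
                        else (if b then X_N' else X_N)).

Definition I_CHSH (N : nat) : 'M[algC]_(2 ^ N) :=
  \sum_(a : bool) \sum_(b : bool) (-1) ^+ (a && b) *: AB N a b.

Definition adj m n (M : 'M[algC]_(m, n)) : 'M[algC]_(n, m) := (map_mx Num.conj M)^T.

Definition psiK (N : nat) (K : {set 'I_N}) : 'cV[algC]_(2 ^ N) :=
  tens (fun k : 'I_N => if k \in K then sigma_x else 1%:M) *m ghz N.

Definition evenK (N : nat) (K : {set 'I_N}) : bool :=
  (K \subset [set k : 'I_N | (k < N.-1)%N]) && ~~ odd #|K|.

(* Main.v *)
Require Import Defs.
From HB Require Import structures.
From mathcomp Require Import all_boot all_order all_algebra all_field.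
From mathcomp Require Import zify ring lra.
Set Implicit Arguments. Unset Strict Implicit. Unset Printing Implicit Defensive.
Import Order.TTheory GRing.Theory Num.Theory.
Local Open Scope ring_scope.

Lemma qbitE N (i : 'I_(2 ^ N)) k : val (qbit i k) = odd (i %/ 2 ^ k).
Proof. by rewrite /qbit; apply: inordK; case: odd. Qed.

Lemma bits_inj_nat N : forall i j, (i < 2 ^ N)%N -> (j < 2 ^ N)%N ->
  (forall k, (k < N)%N -> odd (i %/ 2 ^ k) = odd (j %/ 2 ^ k)) -> i = j.
Proof.
elim: N => [|N IH] i j.
  by rewrite expn0 !ltnS !leqn0 => /eqP-> /eqP->.
move=> hi hj hk.
have h0 := hk 0%N isT; rewrite !expn0 !divn1 in h0.
have e : i./2 = j./2.
  apply: IH.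
  - by rewrite -divn2 ltn_divLR // -expnSr.
  - by rewrite -divn2 ltn_divLR // -expnSr.
  move=> k hk'; have := hk k.+1 hk'.
  by rewrite expnS !divnMA !divn2.
by rewrite -(odd_double_half i) -(odd_double_half j) h0 e.
Qed.

Definition bits N (i : 'I_(2 ^ N)) : {ffun 'I_N -> 'I_2} := [ffun k => qbit i k].

Lemma bits_inj N : injective (@bits N).
Proof.
move=> i j /ffunP h; apply/val_inj/(bits_inj_nat (ltn_ord i) (ltn_ord j)).
move=> k hk; have := h (Ordinal hk); rewrite !ffunE => /(congr1 val).
rewrite !qbitE => e.
change (nat_of_bool (odd (i %/ 2 ^ k)) = odd (j %/ 2 ^ k)) in e.
by move: e; case: (odd (i %/ 2 ^ k)); case: (odd (j %/ 2 ^ k)).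
Qed.

Lemma bits_bij N : bijective (@bits N).
Proof.
apply: inj_card_bij; first exact: bits_inj.
by rewrite card_ffun !card_ord.
Qed.

Lemma tens_mul N (f g : 'I_N -> 'M[algC]_2) :
  tens f *m tens g = tens (fun k => f k *m g k).
Proof.
apply/matrixP => i j; rewrite !mxE.
transitivity (\sum_(l : 'I_(2 ^ N)) \prod_k (f k (qbit i k) (bits l k) * g k (bits l k) (qbit j k))).
  by apply: eq_bigr => l _; rewrite !mxE -big_split /=; apply: eq_bigr => k _; rewrite ffunE.
rewrite -(reindex (@bits N) (P := predT) (F := fun t : {ffun 'I_N -> 'I_2} => \prod_k (f k (qbit i k) (t k) * g k (t k) (qbit j k)))); last first.
  by apply: onW_bij; apply: bits_bij.
rewrite /= -(bigA_distr_bigA (fun k b => f k (qbit i k) b * g k b (qbit j k))).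
by apply: eq_bigr => k _; rewrite mxE.
Qed.

Definition o0 : 'I_2 := Ordinal (isT : (0 < 2)%N).
Definition o1 : 'I_2 := Ordinal (isT : (1 < 2)%N).
Definition bI (b : bool) : 'I_2 := if b then o1 else o0.
Definition dl (b : bool) : 'M[algC]_2 := delta_mx (bI b) 0.

Ltac m2 := let i := fresh "i" in let j := fresh "j" in
  apply/matrixP => i j; rewrite !mxE ?big_ord_recl ?big_ord0 ?mxE;
  case: i => [[|[|//]] ?]; case: j => [[|[|//]] ?]; rewrite /= ?mxE /=;
  rewrite ?(mul0r,mulr0,mul1r,mulr1,add0r,addr0,mulrN1,mulN1r,opprK,oppr0) //.

Lemma sx_sx : sigma_x *m sigma_x = 1%:M.
Proof. m2. Qed.
Lemma sz_sz : sigma_z *m sigma_z = 1%:M.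
Proof. m2. Qed.
Lemma sz_sx : sigma_z *m sigma_x = - (sigma_x *m sigma_z).
Proof. m2. Qed.
Lemma sx_dl b : sigma_x *m dl b = dl (~~ b).
Proof. case: b; m2. Qed.
Lemma sz_dl b : sigma_z *m dl b = (if b then -1 else 1) *: dl b.
Proof. case: b; m2. Qed.
Lemma sx_tr : sigma_x^T = sigma_x.
Proof. m2. Qed.
Lemma sz_tr : sigma_z^T = sigma_z.
Proof. m2. Qed.
Lemma dl_adj a b : (adj (dl a) *m dl b) 0 0 = (a == b)%:R.
Proof. by case: a; case: b; rewrite !mxE !big_ord_recl big_ord0 !mxE /=
  ?conjC0 ?conjC1 ?(mul0r,mulr0,mul1r,mulr1,add0r,addr0). Qed.

Lemma prod_nat_bool (T : finType) (P : pred T) :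
  \prod_(k : T) ((P k)%:R : algC) = ([forall k, P k])%:R.
Proof.
case: (boolP [forall k : T, P k]) => [h|h].
  move/forallP: h => h.
  by rewrite big1 // => k _; rewrite h.
move/forallPn: h => [k hk].
by rewrite (bigD1 k) //= (negbTE hk) mul0r.
Qed.

Lemma tens1 N : tens (fun _ : 'I_N => 1%:M) = 1%:M.
Proof.
apply/matrixP => i j; rewrite !mxE.
rewrite (eq_bigr (fun k => ((qbit i k == qbit j k))%:R)); last by move=> k _; rewrite mxE.
rewrite prod_nat_bool; congr (_ %:R).
congr (nat_of_bool _).
apply/idP/idP => [h|/eqP->]; last by apply/forallP.
move/forallP: h => h.
apply/eqP; apply: bits_inj; apply/ffunP => k; rewrite !ffunE.
exact/eqP/h.
Qed.

Lemma tens_scale N (c : 'I_N -> algC) f :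
  tens (fun k => c k *: f k) = (\prod_k c k) *: tens f.
Proof.
apply/matrixP => i j; rewrite !mxE -big_split /=.
by apply: eq_bigr => k _; rewrite mxE.
Qed.

Lemma tens_tr N (f : 'I_N -> 'M[algC]_2) : (tens f)^T = tens (fun k => (f k)^T).
Proof. by apply/matrixP => i j; rewrite !mxE; apply: eq_bigr => k _; rewrite mxE. Qed.

Lemma tens_adj N (f : 'I_N -> 'M[algC]_2) : adj (tens f) = tens (fun k => adj (f k)).
Proof.
apply/matrixP => i j; rewrite !mxE rmorph_prod.
by apply: eq_bigr => k _; rewrite !mxE.
Qed.

Definition i0 N : 'I_(2 ^ N) := Ordinal (expn_gt0 2 N).
Lemma imax_lt N : ((2 ^ N).-1 < 2 ^ N)%N.
Proof. by rewrite ltn_predL expn_gt0. Qed.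
Definition imax N : 'I_(2 ^ N) := Ordinal (imax_lt N).

Lemma qbit_i0 N k : qbit (i0 N) k = o0.
Proof. by apply/val_inj; rewrite qbitE /= div0n. Qed.

Lemma qbit_imax N (k : 'I_N) : qbit (imax N) k = o1.
Proof.
apply/val_inj; rewrite qbitE /=.
have hk := ltn_ord k.
have e : ((2 ^ N).-1 = 2 ^ k * (2 ^ (N - k)).-1 + (2 ^ k).-1)%N.
  have -> : (2 ^ N = 2 ^ k * 2 ^ (N - k))%N by rewrite -expnD subnKC // ltnW.
  have := expn_gt0 2 k; have := expn_gt0 2 (N - k).
  move: (2 ^ k)%N (2 ^ (N - k))%N => a b ha hb; nia.
rewrite e mulnC divnMDl ?expn_gt0 // divn_small ?addn0 ?prednK ?ltnSn ?expn_gt0 //.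
rewrite -subn1 oddB ?expn_gt0 // oddX /= subn_eq0 leqNgt hk.
by [].
Qed.

Definition Eb N (s : 'I_N -> bool) := tens (fun k => dl (s k)).
Definition d0 N : 'cV[algC]_(2 ^ N) := delta_mx (i0 N) 0.

Lemma eq_tens N (f g : 'I_N -> 'M[algC]_2) : (forall k, f k = g k) -> tens f = tens g.
Proof. by move=> h; apply/matrixP => i j; rewrite !mxE; apply: eq_bigr => k _; rewrite h. Qed.

Lemma mul_d0 N m (M : 'M[algC]_(m, 2 ^ N)) i : (M *m d0 N) i 0 = M i (i0 N).
Proof.
rewrite mxE (bigD1 (i0 N)) //= big1 ?addr0; first by rewrite mxE !eqxx mulr1.
by move=> l hl; rewrite mxE (negbTE hl) mulr0.
Qed.



Lemma Eb_col N (s : 'I_N -> bool) i :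
  (Eb s *m d0 N) i 0 = (bits i == [ffun k => bI (s k)])%:R.
Proof.
rewrite mul_d0 mxE.
rewrite (eq_bigr (fun k => (qbit i k == bI (s k))%:R)); last first.
  by move=> k _; rewrite mxE qbit_i0 andbT.
rewrite (prod_nat_bool (fun k => qbit i k == bI (s k))); congr ((nat_of_bool _)%:R).
apply/idP/idP => [/forallP h|/eqP h].
  by apply/eqP/ffunP => k; rewrite !ffunE; apply/eqP/h.
apply/forallP => k; have := congr1 (fun f : {ffun 'I_N -> 'I_2} => f k) h.
by rewrite !ffunE => ->.
Qed.

Lemma bits_i0 N : bits (i0 N) = [ffun k => bI false].
Proof. by apply/ffunP => k; rewrite !ffunE qbit_i0. Qed.
Lemma bits_imax N : bits (imax N) = [ffun k => bI true].
Proof. by apply/ffunP => k; rewrite !ffunE qbit_imax. Qed.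

Definition cc : algC := (sqrtC 2)^-1.

Lemma ghzE N : (0 < N)%N ->
  ghz N = cc *: ((Eb (fun _ => false) + Eb (fun _ => true)) *m d0 N).
Proof.
move=> hN; apply/matrixP => i j; rewrite (ord1 j).
rewrite mulmxDl [in RHS]mxE [in RHS]mxE (Eb_col _ i) (Eb_col _ i) mxE -/cc.
rewrite -bits_i0 -bits_imax !(inj_eq (@bits_inj N)).
have hne : i0 N != imax N.
  rewrite -(inj_eq val_inj) /= eq_sym -lt0n ltn_predRL.
  by rewrite -[X in (X < _)%N](expn0 2) ltn_exp2l.
have e0 : (i == i0 N) = (val i == 0%N) by rewrite -(inj_eq val_inj).
have e1 : (i == imax N) = (val i == (2 ^ N).-1) by rewrite -(inj_eq val_inj).
rewrite -e0 -e1; clear e0 e1.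
case: (eqVneq i (i0 N)) => [e|h0] /=.
  have -> : (i == imax N) = false.
    by apply/negbTE; apply: contra hne => /eqP h; apply/eqP; rewrite -h e.
  by rewrite addr0 mulr1.
case: (eqVneq i (imax N)) => [e|h1] /=.
  by rewrite add0r mulr1.
by rewrite addr0 mulr0.
Qed.

Definition Zt N := tens (fun _ : 'I_N => sigma_z).
Definition Xt N := tens (fun _ : 'I_N => sigma_x).

Lemma cc2 : cc * cc * 2 = 1.
Proof.
rewrite /cc -invfM -expr2 sqrtCK mulVf //.
by rewrite pnatr_eq0.
Qed.

Lemma sqrt2_cc : 2 * cc = sqrtC 2.
Proof.
have h : sqrtC 2 != 0 :> algC by rewrite sqrtC_eq0 pnatr_eq0.
by rewrite /cc -[X in X * _](sqrtCK 2) expr2 -mulrA mulfV // mulr1.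
Qed.

Lemma prod_if n (i j : 'I_(2 ^ n.+1)) (A B : 'M[algC]_2) :
  \prod_(k < n) (if (widen_ord (leqnSn n) k < n)%N then A else B)
     (qbit i (widen_ord (leqnSn n) k)) (qbit j (widen_ord (leqnSn n) k)) =
  \prod_(k < n) A (qbit i (widen_ord (leqnSn n) k)) (qbit j (widen_ord (leqnSn n) k)).
Proof. by apply: eq_bigr => k _; rewrite /= ltn_ord. Qed.

Lemma I_CHSHE N : (0 < N)%N -> I_CHSH N = sqrtC 2 *: (Zt N + Xt N).
Proof.
case: N => [//|n] _.
apply/matrixP => i j.
rewrite /I_CHSH summxE big_bool /= !summxE !big_bool /=.
rewrite /AB /Zt /Xt /tens !mxE !big_ord_recr /= !ltnn.
rewrite !prod_if.

rewrite /X_j /X_j' /X_N /X_N' -/cc -sqrt2_cc.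
move: sigma_z sigma_x => Sz Sx.
rewrite !mxE.
rewrite expr1 expr0; ring.
Qed.

Lemma prod_sign N (s : 'I_N -> bool) :
  \prod_k (if s k then -1 else 1) = (-1) ^+ #|[pred k | s k]| :> algC.
Proof. by rewrite -big_mkcond /= -prodr_const. Qed.

Lemma Zt_Eb N (s : 'I_N -> bool) : Zt N *m Eb s = (-1) ^+ #|[pred k | s k]| *: Eb s.
Proof.
rewrite /Zt /Eb tens_mul -prod_sign -tens_scale; apply: eq_tens => k.
by rewrite sz_dl.
Qed.

Lemma Xt_Eb N (s : 'I_N -> bool) : Xt N *m Eb s = Eb (fun k => ~~ s k).
Proof. by rewrite /Xt /Eb tens_mul; apply: eq_tens => k; rewrite sx_dl. Qed.

Lemma Eb_ext N (s t : 'I_N -> bool) : s =1 t -> Eb s = Eb t.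
Proof. by move=> h; apply: eq_tens => k; rewrite h. Qed.

Lemma psiKE N (K : {set 'I_N}) : (0 < N)%N ->
  psiK K = cc *: ((Eb (fun k => k \in K) + Eb (fun k => k \notin K)) *m d0 N).
Proof.
move=> hN; rewrite /psiK ghzE // -scalemxAr mulmxA mulmxDr /Eb !tens_mul.
congr (_ *: ((_ + _) *m _)); apply: eq_tens => k;
  by case: (k \in K); rewrite ?sx_dl ?mul1mx.
Qed.

Lemma adjmM m n p (A : 'M[algC]_(m, n)) (B : 'M[algC]_(n, p)) :
  adj (A *m B) = adj B *m adj A.
Proof. by rewrite /adj map_mxM trmx_mul. Qed.

Lemma adjmZ m n c (A : 'M[algC]_(m, n)) : adj (c *: A) = c^* *: adj A.
Proof. by apply/matrixP => i j; rewrite !mxE rmorphM. Qed.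

Lemma adjmD m n (A B : 'M[algC]_(m, n)) : adj (A + B) = adj A + adj B.
Proof. by apply/matrixP => i j; rewrite !mxE rmorphD. Qed.

Lemma adj_d0_mul N m (M : 'M[algC]_(2 ^ N, m)) j : (adj (d0 N) *m M) 0 j = M (i0 N) j.
Proof.
rewrite mxE (bigD1 (i0 N)) //= big1 ?addr0; first by rewrite !mxE !eqxx conjC1 mul1r.
by move=> l hl; rewrite !mxE (negbTE hl) ?andbF ?andbT conjC0 mul0r.
Qed.

Lemma gram_Eb N (s t : 'I_N -> bool) :
  (adj (Eb s *m d0 N) *m (Eb t *m d0 N)) 0 0 = \prod_k ((s k == t k)%:R : algC).
Proof.
rewrite adjmM !mulmxA mul_d0 -!mulmxA adj_d0_mul /Eb tens_adj tens_mul mxE.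
have e0 : o0 = 0 by apply/val_inj.
by apply: eq_bigr => k _; rewrite qbit_i0 e0; apply: dl_adj.
Qed.

Section Abs.
Variable n : nat.
Implicit Types Z X U : 'M[algC]_n.

Lemma two_neq0 : (2 : algC) != 0.
Proof. by rewrite pnatr_eq0. Qed.



Lemma disj_eig Z : (eigenspace Z 1 :&: eigenspace Z (-1))%MS = 0.
Proof.
set W := (_ :&: _)%MS.
have h1 : (W <= eigenspace Z 1)%MS by apply: capmxSl.
have h2 : (W <= eigenspace Z (-1))%MS by apply: capmxSr.
move/eigenspaceP: h1; move/eigenspaceP: h2 => h2 h1.
have : (1 - (-1) : algC) *: W = 0 by rewrite scalerBl -h1 -h2 subrr.
rewrite opprK => /eqP; rewrite scaler_eq0 => /orP [|/eqP //].
by rewrite (negbTE two_neq0).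
Qed.

Lemma eig_mul m (W : 'M[algC]_(m, n)) (Y Q : 'M[algC]_n) (a c : algC) :
  (W <= eigenspace Y a)%MS -> Q *m Y = c *: (Y *m Q) -> (W *m Q <= eigenspace Y (a * c))%MS.
Proof.
move/eigenspaceP => h hQ; apply/eigenspaceP.
by rewrite -mulmxA hQ -scalemxAr mulmxA h -scalemxAl scalerA mulrC.
Qed.

Lemma eig_mul' m (W : 'M[algC]_(m, n)) (Y Q : 'M[algC]_n) (a c b : algC) :
  (W <= eigenspace Y a)%MS -> Q *m Y = c *: (Y *m Q) -> a * c = b -> (W *m Q <= eigenspace Y b)%MS.
Proof. by move=> h1 h2 <-; apply: eig_mul. Qed.

Lemma rank_double (A B Y Q : 'M[algC]_n) :
  Q \in unitmx -> (A <= eigenspace Y 1)%MS -> (B <= eigenspace Y (-1))%MS ->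
  (A *m Q <= B)%MS -> (2 * \rank A <= \rank (A + B))%N.
Proof.
move=> hQ hA hB hAB.
have d : (A :&: B)%MS = 0.
  apply/eqP; rewrite -submx0 -(disj_eig Y); exact: capmxS.
rewrite mxrank_disjoint_sum // mul2n -addnn leq_add2l.
by rewrite -(mxrankMfree A (B:=Q)) ?row_free_unit // mxrankS.
Qed.

Lemma rank_quarter Z X U V :
  Z *m X = X *m Z -> U \in unitmx -> V \in unitmx ->
  U *m Z = -1 *: (Z *m U) -> U *m X = 1 *: (X *m U) ->
  V *m X = -1 *: (X *m V) ->
  (4 * \rank (eigenspace Z 1 :&: eigenspace X 1)%MS <= n)%N.
Proof.
move=> hZX hU hV hUZ hUX hVX.
set E1 := (eigenspace Z 1 :&: eigenspace X 1)%MS.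
set E2 := (eigenspace Z (-1) :&: eigenspace X 1)%MS.
have hE1 : (2 * \rank E1 <= \rank (E1 + E2))%N.
  apply: (rank_double (Y := Z) (Q := U)) => //; first exact: capmxSl.
    exact: capmxSl.
  rewrite sub_capmx; apply/andP; split.
    by apply: (eig_mul' (a := 1) (c := -1)) => //; [apply: capmxSl | rewrite mul1r].
  by apply: (eig_mul' (a := 1) (c := 1)) => //; [apply: capmxSr | rewrite mul1r].
have hF : (2 * \rank (eigenspace X 1) <= \rank (eigenspace X 1 + eigenspace X (-1)))%N.
  apply: (rank_double (Y := X) (Q := V)) => //.
  by apply: (eig_mul' (a := 1) (c := -1)) => //; rewrite mul1r.
have s12 : (E1 + E2 <= eigenspace X 1)%MS.
  by rewrite addsmx_sub !capmxSr.
have := mxrankS s12; have := rank_leq_col (eigenspace X 1 + eigenspace X (-1))%MS.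
move: hE1 hF; lia.
Qed.

Section Rel.
Variables (Z X : 'M[algC]_n).
Hypotheses (hZZ : Z *m Z = 1%:M) (hXX : X *m X = 1%:M) (hZX : Z *m X = X *m Z).

Lemma rel_eqs m (W : 'M[algC]_(m, n)) (c : algC) :
  W *m (Z + X) = c *: W ->
  [/\ W *m Z + W *m X = c *: W,
      W + (W *m Z) *m X = c *: (W *m Z) &
      (W *m Z) *m X + W = c *: (W *m X)].
Proof.
move=> h; rewrite mulmxDr in h; split => //.
  have := congr1 (fun T => T *m Z) h; rewrite mulmxDl -scalemxAl.
  by rewrite -!mulmxA hZZ mulmx1 -hZX.
have := congr1 (fun T => T *m X) h; rewrite mulmxDl -scalemxAl.
by rewrite -!mulmxA hXX mulmx1 => <-.
Qed.

Lemma eig_char m (W : 'M[algC]_(m, n)) (s : algC) : s != 0 ->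
  (W <= eigenspace (s *: (Z + X)) (2 * s))%MS = (W <= eigenspace Z 1 :&: eigenspace X 1)%MS.
Proof.
move=> hs; rewrite sub_capmx; apply/idP/andP.
  move/eigenspaceP; rewrite -scalemxAr mulrC -scalerA => /(scalerI hs) h.
  have [e1 e2 e3] := rel_eqs h.
  have hab : W *m Z = W *m X.
    apply: (scalerI two_neq0); by rewrite -e2 -e3 addrC.
  have ha : W *m Z = W.
    apply: (scalerI two_neq0); rewrite -e1 -hab.
    by rewrite -[in RHS](scale1r (W *m Z)) -scalerDl.
  by split; apply/eigenspaceP; rewrite scale1r // -hab.
case=> /eigenspaceP h1 /eigenspaceP h2; apply/eigenspaceP.
rewrite -scalemxAr mulmxDr h1 h2 scale1r.
by rewrite mulrC -scalerA scaler_nat mulr2n.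
Qed.

Lemma eig_vals (v : 'rV[algC]_n) (c : algC) : v != 0 -> v *m (Z + X) = c *: v ->
  [\/ c = 0, c = 2 | c = -2].
Proof.
move=> hv h; have [e1 e2 e3] := rel_eqs h.
have hab : c *: (v *m Z) = c *: (v *m X) by rewrite -e2 -e3 addrC.
case: (eqVneq c 0) => [->|hc]; first by constructor 1.
have ab := scalerI hc hab.
have ec : (v *m Z) *m X = v by rewrite ab -mulmxA hXX mulmx1.
rewrite ec -ab in e1 e2.
have e4 : 2 *: v = c *: (v *m Z) by rewrite scaler_nat mulr2n.
have e5 : 2 *: (v *m Z) = c *: v by rewrite scaler_nat mulr2n.
have : (2 * 2) *: v = (c * c) *: v.
  rewrite -scalerA e4 scalerA (mulrC 2 c) -scalerA -[in LHS]scalerA e5 //.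
move/eqP; rewrite -subr_eq0 -scalerBl scaler_eq0 (negbTE hv) orbF subr_eq0.
rewrite -!expr2 eq_sym eqf_sqr => /orP [/eqP->|/eqP->]; by [constructor 2 | constructor 3].
Qed.
End Rel.
End Abs.

Local Close Scope ring_scope.

Section Count.
Variable n : nat.
Hypothesis hn : (0 < n)%N.
Let T : {set 'I_n.+1} := [set k : 'I_n.+1 | (k < n)%N].
Let t0 : 'I_n.+1 := ord0.
Let phi (K : {set 'I_n.+1}) := if t0 \in K then K :\ t0 else t0 |: K.

Lemma t0T : t0 \in T.
Proof. by rewrite inE. Qed.

Lemma cardT : #|T| = n.
Proof.
have -> : T = [set~ ord_max].
  apply/setP => k; rewrite !inE -(inj_eq val_inj) /= ltn_neqAle -ltnS ltn_ord andbT.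
  by [].
by rewrite cardsC1 card_ord.
Qed.

Lemma phiK : involutive phi.
Proof.
move=> K; rewrite /phi; case: (boolP (t0 \in K)) => h.
  rewrite !inE eqxx /= setD1K //.
by rewrite !inE eqxx /= setU1K.
Qed.

Lemma phi_sub (K : {set 'I_n.+1}) : K \subset T -> phi K \subset T.
Proof.
move=> h; rewrite /phi; case: ifP => _.
  exact: subset_trans (subD1set _ _) h.
by rewrite subUset sub1set t0T h.
Qed.

Lemma phi_odd (K : {set 'I_n.+1}) : odd #|phi K| = ~~ odd #|K|.
Proof.
rewrite /phi; case: (boolP (t0 \in K)) => h.
  by rewrite [in RHS](cardsD1 t0) h /= negbK.
by rewrite cardsU1 h.
Qed.

Lemma card_even_sets : #|[set K : {set 'I_n.+1} | evenK K]| = (2 ^ n.-1)%N.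
Proof.
set Pe := [set K | evenK K].
set Po := [set K : {set 'I_n.+1} | (K \subset T) && odd #|K|].
have ePe : Pe = [set K : {set 'I_n.+1} | (K \subset T) && ~~ odd #|K|] by apply/setP => K; rewrite !inE.
have inj : injective phi := can_inj phiK.
have h1 : (#|Pe| <= #|Po|)%N.
  rewrite -(card_imset _ inj); apply: subset_leq_card; apply/subsetP => K' /imsetP [K hK ->].
  move: hK; rewrite ePe !inE => /andP [a1 a2]; by rewrite phi_sub // phi_odd.
have h2 : (#|Po| <= #|Pe|)%N.
  rewrite -(card_imset _ inj); apply: subset_leq_card; apply/subsetP => K' /imsetP [K hK ->].
  move: hK; rewrite ePe !inE => /andP [a1 a2]; by rewrite phi_sub // phi_odd a2.
have hs : (#|Pe| + #|Po| = 2 ^ n)%N.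
  have := card_powerset T; rewrite cardT => <-; rewrite -[RHS](cardsID [set K : {set 'I_n.+1} | ~~ odd #|K|]).
  congr (_ + _)%N; apply: eq_card => K; rewrite !inE.
    by [].
  by rewrite negbK andbC.
have : (2 ^ n = 2 * 2 ^ n.-1)%N by rewrite -expnS prednK.
lia.
Qed.
End Count.

Local Open Scope ring_scope.

Lemma tens_comm N (f g : 'I_N -> 'M[algC]_2) (c : 'I_N -> algC) :
  (forall k, f k *m g k = c k *: (g k *m f k)) ->
  tens f *m tens g = (\prod_k c k) *: (tens g *m tens f).
Proof.
by move=> h; rewrite !tens_mul -tens_scale; apply: eq_tens.
Qed.



Lemma prodN1 N : \prod_(k < N) (-1 : algC) = (-1) ^+ N.
Proof. by rewrite prodr_const card_ord. Qed.

Lemma Zt2 N : Zt N *m Zt N = 1%:M.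
Proof. by rewrite /Zt tens_mul -tens1; apply: eq_tens => k; rewrite sz_sz. Qed.
Lemma Xt2 N : Xt N *m Xt N = 1%:M.
Proof. by rewrite /Xt tens_mul -tens1; apply: eq_tens => k; rewrite sx_sx. Qed.
Lemma ZXt N : ~~ odd N -> Zt N *m Xt N = Xt N *m Zt N.
Proof.
move=> h; rewrite /Zt /Xt (tens_comm (c := fun _ => -1)); last first.
  by move=> k; rewrite sz_sx scaleN1r.
by rewrite prodN1 -signr_odd (negbTE h) expr0 scale1r.
Qed.

Lemma Zt_tr N : (Zt N)^T = Zt N.
Proof. by rewrite /Zt tens_tr; apply: eq_tens => k; rewrite sz_tr. Qed.
Lemma Xt_tr N : (Xt N)^T = Xt N.
Proof. by rewrite /Xt tens_tr; apply: eq_tens => k; rewrite sx_tr. Qed.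

Section UV.
Variables (N : nat) (k0 : 'I_N).
Definition Ut := tens (fun k : 'I_N => if k == k0 then sigma_x else 1%:M).
Definition Vt := tens (fun k : 'I_N => if k == k0 then sigma_z else 1%:M).

Lemma prod_k0 : \prod_(k < N) (if k == k0 then -1 else 1) = -1 :> algC.
Proof. by rewrite (bigD1 k0) //= eqxx big1 ?mulr1 // => k /negbTE ->. Qed.

Lemma Ut_unit : Ut \in unitmx.
Proof.
have h : Ut *m Ut = 1%:M.
  rewrite /Ut tens_mul -tens1; apply: eq_tens => k.
  by case: (k == k0); rewrite ?sx_sx ?mul1mx.
by case: (mulmx1_unit h).
Qed.
Lemma Vt_unit : Vt \in unitmx.
Proof.
have h : Vt *m Vt = 1%:M.
  rewrite /Vt tens_mul -tens1; apply: eq_tens => k.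
  by case: (k == k0); rewrite ?sz_sz ?mul1mx.
by case: (mulmx1_unit h).
Qed.
Lemma UZ : Ut *m Zt N = -1 *: (Zt N *m Ut).
Proof.
rewrite /Ut /Zt (tens_comm (c := fun k => if k == k0 then -1 else 1)) ?prod_k0 //.
move=> k; case: (k == k0); last by rewrite mul1mx mulmx1 scale1r.
by rewrite sz_sx scaleN1r opprK.
Qed.
Lemma UX : Ut *m Xt N = 1 *: (Xt N *m Ut).
Proof.
rewrite /Ut /Xt (tens_comm (c := fun k => 1)) ?prodr_const ?expr1n //.
by move=> k; case: (k == k0); rewrite ?mul1mx ?mulmx1 scale1r.
Qed.
Lemma VX : Vt *m Xt N = -1 *: (Xt N *m Vt).
Proof.
rewrite /Vt /Xt (tens_comm (c := fun k => if k == k0 then -1 else 1)) ?prod_k0 //.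
move=> k; case: (k == k0); last by rewrite mul1mx mulmx1 scale1r.
by rewrite sz_sx scaleN1r.
Qed.
End UV.

Lemma Zt_psi N (K : {set 'I_N}) : (0 < N)%N -> ~~ odd N -> ~~ odd #|K| ->
  Zt N *m psiK K = psiK K.
Proof.
move=> hN hNe hK; rewrite psiKE // -scalemxAr mulmxA mulmxDr !Zt_Eb.
have c1 : #|[pred k | k \in K]| = #|K| by apply: eq_card.
have c2 : #|[pred k : 'I_N | k \notin K]| = #|~: K| by apply: eq_card => k; rewrite !inE.
have o2 : ~~ odd #|~: K|.
  have := cardsC K; rewrite card_ord => e.
  by move: hNe; rewrite -[X in odd X]e oddD (negbTE hK).
rewrite c1 c2 -(signr_odd _ #|K|) -(signr_odd _ #|~: K|) (negbTE hK) (negbTE o2).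
by rewrite !expr0 !scale1r.
Qed.

Lemma Xt_psi N (K : {set 'I_N}) : (0 < N)%N -> Xt N *m psiK K = psiK K.
Proof.
move=> hN; rewrite psiKE // -scalemxAr mulmxA mulmxDr !Xt_Eb addrC.
by rewrite (@Eb_ext N (fun k => ~~ (k \notin K)) (fun k => k \in K)) // => k; rewrite negbK.
Qed.

Lemma I_psi N (K : {set 'I_N}) : (0 < N)%N -> ~~ odd N -> ~~ odd #|K| ->
  I_CHSH N *m psiK K = (2 * sqrtC 2) *: psiK K.
Proof.
move=> hN hNe hK; rewrite I_CHSHE // -scalemxAl mulmxDl Zt_psi // Xt_psi //.
by rewrite -mulr2n -scaler_nat scalerA mulrC.
Qed.

Lemma ghz_psi0 N : (0 < N)%N -> ghz N = psiK set0.
Proof.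
move=> hN; rewrite psiKE // ghzE //.
rewrite (@Eb_ext N (fun k => k \in set0) (fun _ => false)); last by move=> k; rewrite in_set0.
by rewrite (@Eb_ext N (fun k => k \notin set0) (fun _ => true)) // => k; rewrite in_set0.
Qed.

Lemma cc_conj : cc^* = cc.
Proof. by apply: geC0_conj; rewrite /cc invr_ge0 sqrtC_ge0 ler0n. Qed.

Lemma entD m n (A B : 'M[algC]_(m, n)) i j : (A + B) i j = A i j + B i j.
Proof. by rewrite mxE. Qed.
Lemma entZ m n c (A : 'M[algC]_(m, n)) i j : (c *: A) i j = c * A i j.
Proof. by rewrite mxE. Qed.

Lemma gram_psi N (K K' : {set 'I_N}) : (0 < N)%N -> evenK K -> evenK K' ->
  (adj (psiK K) *m psiK K') 0 0 = (K == K')%:R.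
Proof.
move=> hN hK hK'; rewrite !psiKE // (@adjmZ _ _ cc) cc_conj -scalemxAl -scalemxAr.
rewrite !mulmxDl adjmD !mulmxDl !mulmxDr !entZ !entD !gram_Eb.
have km_lt : (N.-1 < N)%N by rewrite ltn_predL.
pose km : 'I_N := Ordinal km_lt.
have nK : forall L : {set 'I_N}, evenK L -> km \notin L.
  move=> L /andP [/subsetP hL _]; apply/negP => /hL; by rewrite inE ltnn.
have z1 : \prod_k (((k \in K) == (k \notin K'))%:R : algC) = 0.
  by rewrite (bigD1 km) //= (negbTE (nK _ hK)) (nK _ hK') mul0r.
have z2 : \prod_k (((k \notin K) == (k \in K'))%:R : algC) = 0.
  by rewrite (bigD1 km) //= (negbTE (nK _ hK')) (nK _ hK) mul0r.
have p1 : \prod_k (((k \in K) == (k \in K'))%:R : algC) = (K == K')%:R.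
  rewrite (prod_nat_bool (fun k => (k \in K) == (k \in K'))); congr ((nat_of_bool _)%:R).
  apply/idP/idP => [h|/eqP ->]; last by apply/forallP => k.
  move/forallP: h => h; apply/eqP/setP => k; exact/eqP/h.
have p4 : \prod_k (((k \notin K) == (k \notin K'))%:R : algC) = (K == K')%:R.
  rewrite -p1; apply: eq_bigr => k _; by case: (k \in K); case: (k \in K').
rewrite z1 z2 p1 p4 !addr0 add0r.
transitivity (cc * cc * 2 * (K == K')%:R); first by ring.
by rewrite cc2 mul1r.
Qed.

Lemma trZ m n (c : algC) (A : 'M[algC]_(m, n)) : (c *: A)^T = c *: A^T.
Proof. by apply/matrixP => i j; rewrite !mxE. Qed.
Lemma trM m n p (A : 'M[algC]_(m, n)) (B : 'M[algC]_(n, p)) : (A *m B)^T = B^T *m A^T.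
Proof. exact: trmx_mul. Qed.

Lemma card_A N : (4 <= N)%N -> #|[set K : {set 'I_N} | evenK K]| = (2 ^ (N - 2))%N.
Proof.
case: N => [//|n] h; rewrite card_even_sets; last by lia.
by congr (2 ^ _)%N; lia.
Qed.

Theorem mainTheorem4 (N : nat) (hN4 : (4 <= N)%N) (hNeven : ~~ odd N) :
  let I := I_CHSH N in
  let lam : algC := 2 * sqrtC 2 in
  [/\ (adj (ghz N) *m I *m ghz N) 0 0 = lam,
      eigenvalue I lam /\ (forall mu : algC, eigenvalue I mu -> mu <= lam),
      \rank (eigenspace I^T lam) = (2 ^ (N - 2))%N,
      (forall K K' : {set 'I_N}, evenK K -> evenK K' ->
         (adj (psiK K) *m psiK K') 0 0 = (K == K')%:R) &
      (eigenspace I^T lam == (\sum_(K : {set 'I_N} | evenK K) <<(psiK K)^T>>)%MS)%MS].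
Proof.
move=> I lam.
have hN : (0 < N)%N by apply: leq_trans hN4.
set s := sqrtC (2 : algC).
have hs : s != 0 by rewrite sqrtC_eq0 pnatr_eq0.
have s_ge0 : 0 <= s by rewrite sqrtC_ge0 ler0n.
have IE : I = s *: (Zt N + Xt N) by rewrite /I I_CHSHE.
have ITE : I^T = I by rewrite IE linearZ linearD /= Zt_tr Xt_tr.
have even0 : evenK (set0 : {set 'I_N}) by rewrite /evenK sub0set cards0.
have Ipsi : forall K, evenK K -> I *m psiK K = lam *: psiK K.
  by move=> K /andP [_ hK]; apply: I_psi.
have gram := fun K K' => @gram_psi N K K' hN.
have G0 : ghz N = psiK set0 by apply: ghz_psi0.
have gG : (adj (ghz N) *m ghz N) 0 0 = 1 by rewrite G0 gram // eqxx.
(* eigenvectors as rows *)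
have rowE : forall K, evenK K -> ((psiK K)^T <= eigenspace I^T lam)%MS.
  move=> K hK; apply/eigenspaceP; rewrite -trM Ipsi //.
  by rewrite trZ.
have hZZ := Zt2 N; have hXX := Xt2 N; have hZX := ZXt hNeven.
have eqE : (eigenspace I^T lam == eigenspace (Zt N) 1 :&: eigenspace (Xt N) 1)%MS.
  apply/andP; split.
    by rewrite -(eig_char hZZ hXX hZX _ hs) ITE IE.
  by rewrite ITE IE /lam -/s (eig_char hZZ hXX hZX _ hs).
set E := eigenspace I^T lam.
set S := (\sum_(K : {set 'I_N} | evenK K) <<(psiK K)^T>>)%MS.
have SE : (S <= E)%MS.
  by apply/sumsmx_subP => K hK; rewrite genmxE; apply: rowE.
set A := [set K : {set 'I_N} | evenK K].
pose B := \matrix_(i < #|A|) (psiK (enum_val i))^T.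
have BS : (B <= S)%MS.
  apply/row_subP => i; rewrite rowK; apply: (sumsmx_sup (enum_val i)).
    by have := enum_valP i; rewrite inE.
  by rewrite genmxE.
have rB : \rank B = #|A|.
  apply: mxrank_unitary; apply/unitarymxP/matrixP => i j.
  have hi := enum_valP i; have hj := enum_valP j; rewrite !inE in hi hj.
  have := gram _ _ hj hi; rewrite (inj_eq enum_val_inj) eq_sym => h.
  rewrite [RHS]mxE -h !mxE; apply: eq_bigr => l _; rewrite !mxE mulrC.
  by [].
have cA : #|A| = (2 ^ (N - 2))%N by apply: card_A.
have k0lt : (0 < N)%N := hN.
pose k0 : 'I_N := Ordinal k0lt.
have up : (4 * \rank E <= 2 ^ N)%N.
  rewrite (eqmx_rank eqE); apply: rank_quarter => //.
  - exact: Ut_unit k0.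
  - exact: Vt_unit k0.
  - exact: UZ.
  - exact: UX.
  - exact: VX.
have lo : (\rank B <= \rank E)%N by apply: mxrankS; apply: submx_trans BS SE.
have loS : (\rank B <= \rank S)%N by apply: mxrankS.
have h2N : (2 <= N)%N by apply: leq_trans hN4.
have e2 : (2 ^ N = 4 * 2 ^ (N - 2))%N.
  by rewrite -{1}(subnKC h2N) expnD.
have rE : \rank E = (2 ^ (N - 2))%N by lia.
split.
- by rewrite G0 -mulmxA Ipsi // -scalemxAr entZ -G0 gG mulr1.
- split.
    apply/eigenvalueP; exists (ghz N)^T.
      by rewrite G0 -[X in _ *m X]ITE -trM Ipsi // trZ.
    apply/eqP => h; have := gG; rewrite -[ghz N]trmxK h.
    by rewrite linear0 mulmx0 mxE => /eqP; rewrite eq_sym oner_eq0.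
  move=> mu /eigenvalueP [v hv nv].
  have hv' : v *m (Zt N + Xt N) = (mu / s) *: v.
    apply: (scalerI hs); rewrite scalemxAr -IE hv scalerA mulrC divfK //.
  case: (eig_vals hZZ hXX hZX nv hv') => e.
  + have -> : mu = 0 by move/eqP: e; rewrite mulf_eq0 invr_eq0 (negbTE hs) orbF => /eqP.
    by rewrite /lam mulr_ge0 ?ler0n.
  + have -> : mu = lam by rewrite /lam -/s -e divfK.
    by [].
  + have -> : mu = - lam by rewrite /lam -/s -mulNr -e divfK.
    by rewrite lerNl; apply: (le_trans (y := 0)); rewrite ?oppr_le0 mulr_ge0 ?ler0n.
- exact: rE.
- by move=> K K' hK hK'; apply: gram.
- apply/andP; split => //.
  rewrite -(mxrank_leqif_sup SE).2.
  by apply/eqP; have := mxrankS SE; lia.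
Qed.
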